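(* Let $c>0$, $m>0$, $q\in\mathbb{R}\setminus\{0\}$, and let $E=(E_1,\dots,E_n)$ with each $E_j\in C^1(\mathbb{R})$ and $\sup_{t}\sum_j|E_j^{(k)}(t)|<E_{0,k}<\infty$ for $k\in\{0,1\}$; put $b(t)=\int_0^tqE(s)\,ds$ and, for $\xi\in\mathbb{R}^n$, $Q(t,\xi)=(c^2(\xi+b(t))^2+(mc^2)^2)^{1/2}$, $Q'=\partial_tQ$. Consider the integral equations $$B(t,\xi)=\int_0^t\Big(Q(s,\xi)-Q(s,\xi)^{-1}Q'(s,\xi)\sin B(s,\xi)\cos B(s,\xi)\Big)ds,$$ $$D(t,\xi)=\int_0^t\Big(Q(s,\xi)+Q(s,\xi)^{-1}Q'(s,\xi)\sin D(s,\xi)\cos D(s,\xi)\Big)ds.$$ Then solutions $B(\cdot,\xi)$, $D(\cdot,\xi)$ of these equations are of class $C^2(\mathbb{R})$ in $t$ (as are $A(t,\xi)=\exp(-\int_0^tQ^{-1}Q'\sin^2B\,ds)$ and $C(t,\xi)=Q(0,\xi)^{-1}\exp(-\int_0^tQ^{-1}Q'\cos^2D\,ds)$), and the solutions $B$ and $D$ of these integral equations are unique. *)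

(* Defs.v *)
From Stdlib Require Import Reals.
From Coquelicot Require Import Coquelicot.
Open Scope R_scope.

Fixpoint sumR (n : nat) (f : nat -> R) : R :=
  match n with
  | O => 0
  | S k => sumR k f + f k
  end.

Definition isC1 (f : R -> R) : Prop :=
  forall t, ex_derive f t /\ continuous (Derive f) t.

Definition isC2 (f : R -> R) : Prop :=
  forall t, ex_derive f t /\ ex_derive (Derive f) t /\
            continuous (Derive (Derive f)) t.

Definition bfun (q : R) (E : nat -> R -> R) (j : nat) (t : R) : R :=
  RInt (fun s => q * E j s) 0 t.

Definition Qfun (c m q : R) (n : nat) (E : nat -> R -> R)
    (xi : nat -> R) (t : R) : R :=
  sqrt (c ^ 2 * sumR n (fun j => (xi j + bfun q E j t) ^ 2) + (m * c ^ 2) ^ 2).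

Definition Qder (c m q : R) (n : nat) (E : nat -> R -> R)
    (xi : nat -> R) (t : R) : R :=
  Derive (Qfun c m q n E xi) t.

Definition solB (c m q : R) (n : nat) (E : nat -> R -> R)
    (xi : nat -> R) (B : R -> R) : Prop :=
  forall t, is_RInt (fun s => Qfun c m q n E xi s
      - / Qfun c m q n E xi s * Qder c m q n E xi s * sin (B s) * cos (B s))
    0 t (B t).

Definition solD (c m q : R) (n : nat) (E : nat -> R -> R)
    (xi : nat -> R) (D : R -> R) : Prop :=
  forall t, is_RInt (fun s => Qfun c m q n E xi s
      + / Qfun c m q n E xi s * Qder c m q n E xi s * sin (D s) * cos (D s))
    0 t (D t).

Definition Afun (c m q : R) (n : nat) (E : nat -> R -> R)
    (xi : nat -> R) (B : R -> R) (t : R) : R :=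
  exp (- RInt (fun s => / Qfun c m q n E xi s * Qder c m q n E xi s
                         * (sin (B s)) ^ 2) 0 t).

Definition Cfun (c m q : R) (n : nat) (E : nat -> R -> R)
    (xi : nat -> R) (D : R -> R) (t : R) : R :=
  / Qfun c m q n E xi 0 *
  exp (- RInt (fun s => / Qfun c m q n E xi s * Qder c m q n E xi s
                         * (cos (D s)) ^ 2) 0 t).

(* Main.v *)
Require Import Defs.
From Stdlib Require Import Reals Lra Lia FunctionalExtensionality.
From Coquelicot Require Import Coquelicot.
Open Scope R_scope.

Lemma exd_cont (f : R -> R) x : ex_derive f x -> continuous f x.
Proof. apply (@ex_derive_continuous R_AbsRing R_NormedModule f x). Qed.

Definition D1 (f f1 : R -> R) := forall t, is_derive f t (f1 t) /\ continuous f1 t.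

Lemma D1_cont f f1 t : D1 f f1 -> continuous f t.
Proof. intros H. apply exd_cont. exists (f1 t). apply H. Qed.

Lemma D1_ext f f1 g g1 : D1 f f1 -> (forall t, f t = g t) -> (forall t, f1 t = g1 t) -> D1 g g1.
Proof.
  intros H e e1.
  assert (f = g) by (apply functional_extensionality; auto).
  assert (f1 = g1) by (apply functional_extensionality; auto). subst. auto.
Qed.

Lemma D1_const a : D1 (fun _ => a) (fun _ => 0).
Proof. intros t; split. apply (is_derive_const (K:=R_AbsRing) (V:=R_NormedModule)). apply (continuous_const (U:=R_UniformSpace) (V:=R_UniformSpace)). Qed.

Lemma D1_plus f f1 g g1 : D1 f f1 -> D1 g g1 ->
  D1 (fun t => f t + g t) (fun t => f1 t + g1 t).
Proof.
  intros Hf Hg t; destruct (Hf t), (Hg t); split.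
  apply (is_derive_plus (K:=R_AbsRing) (V:=R_NormedModule) f g); auto.
  apply (continuous_plus (U:=R_UniformSpace) (V:=R_NormedModule) f1 g1); auto.
Qed.

Lemma D1_mult f f1 g g1 : D1 f f1 -> D1 g g1 ->
  D1 (fun t => f t * g t) (fun t => f1 t * g t + f t * g1 t).
Proof.
  intros Hf Hg t; destruct (Hf t), (Hg t); split.
  apply (is_derive_mult (K:=R_AbsRing) f g); auto. intros; apply Rmult_comm.
  apply (continuous_plus (U:=R_UniformSpace) (V:=R_NormedModule) (fun t => f1 t * g t) (fun t => f t * g1 t)).
  apply (continuous_mult (U:=R_UniformSpace) (K:=R_AbsRing) f1 g); auto. eapply D1_cont; eauto.
  apply (continuous_mult (U:=R_UniformSpace) (K:=R_AbsRing) f g1); auto. eapply D1_cont; eauto.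
Qed.

Lemma D1_scal a f f1 : D1 f f1 -> D1 (fun t => a * f t) (fun t => a * f1 t).
Proof.
  intros Hf. eapply D1_ext. apply D1_mult. apply D1_const. apply Hf.
  intros; reflexivity. intros; simpl; ring.
Qed.

Lemma D1_comp h h1 f f1 : (forall x, is_derive h x (h1 x)) -> (forall x, continuous h1 x) ->
  D1 f f1 -> D1 (fun t => h (f t)) (fun t => h1 (f t) * f1 t).
Proof.
  intros Hh Hh1 Hf t; destruct (Hf t); split.
  replace (h1 (f t) * f1 t) with (scal (f1 t) (h1 (f t))).
  apply (is_derive_comp (K:=R_AbsRing) (V:=R_NormedModule) h f). apply Hh. auto.
  unfold scal; simpl; unfold mult; simpl; ring.
  apply (continuous_mult (U:=R_UniformSpace) (K:=R_AbsRing) (fun t => h1 (f t)) f1); auto.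
  apply (continuous_comp (U:=R_UniformSpace) (V:=R_UniformSpace) (W:=R_UniformSpace) f h1). eapply D1_cont; eauto. auto.
Qed.

Lemma D1_sin f f1 : D1 f f1 -> D1 (fun t => sin (f t)) (fun t => cos (f t) * f1 t).
Proof. apply (D1_comp sin cos). apply is_derive_sin. intros; apply exd_cont.
  eexists; apply is_derive_cos. Qed.
Lemma D1_cos f f1 : D1 f f1 -> D1 (fun t => cos (f t)) (fun t => - sin (f t) * f1 t).
Proof. apply (D1_comp cos (fun x => - sin x)). apply is_derive_cos. intros; apply (continuous_opp (U:=R_UniformSpace) (V:=R_NormedModule) sin). apply exd_cont.
  eexists; apply is_derive_sin. Qed.
Lemma D1_exp f f1 : D1 f f1 -> D1 (fun t => exp (f t)) (fun t => exp (f t) * f1 t).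
Proof. apply (D1_comp exp exp). apply is_derive_exp. intros; apply exd_cont.
  eexists; apply is_derive_exp. Qed.

Lemma D1_inv f f1 : (forall t, f t <> 0) -> D1 f f1 ->
  D1 (fun t => / f t) (fun t => - f1 t / f t ^ 2).
Proof.
  intros Hn Hf t; destruct (Hf t); split.
  apply is_derive_inv; auto.
  assert (Hc : forall t, continuous (fun t => / f t) t).
  { intros s. apply exd_cont. eexists. apply is_derive_inv. apply Hf. auto. }
  assert (E: (fun t => - f1 t / f t ^ 2) = (fun t => (- f1 t) * (/ f t * / f t))).
  { apply functional_extensionality; intros; field; auto. }
  rewrite E.
  apply (continuous_mult (U:=R_UniformSpace) (K:=R_AbsRing) (fun t => - (f1 t)) (fun t => / f t * / f t)).
  apply (continuous_opp (U:=R_UniformSpace) (V:=R_NormedModule) f1); auto.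
  apply (continuous_mult (U:=R_UniformSpace) (K:=R_AbsRing) (fun t => / f t) (fun t => / f t)); auto.
Qed.

Lemma D1_sqrt f f1 : (forall t, 0 < f t) -> D1 f f1 ->
  D1 (fun t => sqrt (f t)) (fun t => f1 t / (2 * sqrt (f t))).
Proof.
  intros Hp Hf.
  assert (Hd : forall t, is_derive (fun t => sqrt (f t)) t (f1 t / (2 * sqrt (f t)))).
  { intros t. apply is_derive_sqrt. apply Hf. auto. }
  assert (Hs : D1 (fun t => 2 * sqrt (f t)) (fun t => 2 * (f1 t / (2 * sqrt (f t))))).
  { intros t; split. apply is_derive_scal. auto.
    apply (continuous_mult (U:=R_UniformSpace) (K:=R_AbsRing) (fun _ => 2) (fun t => f1 t / (2 * sqrt (f t)))).
    apply (continuous_const (U:=R_UniformSpace) (V:=R_UniformSpace)).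
    apply (continuous_mult (U:=R_UniformSpace) (K:=R_AbsRing) f1 (fun t => / (2 * sqrt (f t)))). apply Hf.
    apply exd_cont. eexists. apply is_derive_inv.
    apply is_derive_scal. apply Hd. apply Rgt_not_eq. apply Rmult_lt_0_compat. lra.
    apply sqrt_lt_R0. auto. }
  intros t; split. auto.
  apply (continuous_mult (U:=R_UniformSpace) (K:=R_AbsRing) f1 (fun t => / (2 * sqrt (f t)))). apply Hf.
  eapply D1_cont. eapply (D1_inv _ _ _ Hs). Unshelve. intros s. apply Rgt_not_eq. apply Rmult_lt_0_compat. lra.
    apply sqrt_lt_R0. auto.
Qed.

Definition C2 (f : R -> R) := exists f1 f2, D1 f f1 /\ D1 f1 f2.

Lemma D1_Derive f f1 : D1 f f1 -> Derive f = f1.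
Proof. intros H; apply functional_extensionality; intros t. apply is_derive_unique. apply H. Qed.

Lemma C2_canon f : C2 f -> D1 f (Derive f) /\ D1 (Derive f) (Derive (Derive f)).
Proof. intros (f1 & f2 & H1 & H2). rewrite (D1_Derive _ _ H1), (D1_Derive _ _ H2). auto. Qed.

Lemma C2_isC2 f : C2 f -> isC2 f.
Proof.
  intros H. destruct (C2_canon f H) as [H1 H2]. intros t. split; [|split].
  eexists; apply H1. eexists; apply H2. apply H2.
Qed.

Lemma C2_ext f g : C2 f -> (forall t, f t = g t) -> C2 g.
Proof. intros H e. assert (f = g) by (apply functional_extensionality; auto). subst; auto. Qed.

Lemma C2_const a : C2 (fun _ => a).
Proof. exists (fun _ => 0), (fun _ => 0). split; apply D1_const. Qed.

Lemma C2_plus f g : C2 f -> C2 g -> C2 (fun t => f t + g t).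
Proof.
  intros (f1 & f2 & A1 & A2) (g1 & g2 & B1 & B2).
  do 2 eexists; split. apply D1_plus; eauto. apply D1_plus; eauto.
Qed.

Lemma C2_mult f g : C2 f -> C2 g -> C2 (fun t => f t * g t).
Proof.
  intros (f1 & f2 & A1 & A2) (g1 & g2 & B1 & B2).
  do 2 eexists; split. apply D1_mult; eauto.
  apply D1_plus; apply D1_mult; eauto.
Qed.

Lemma C2_sum n (f : nat -> R -> R) : (forall j, (j < n)%nat -> C2 (f j)) ->
  C2 (fun t => sumR n (fun j => f j t)).
Proof.
  induction n; intros H.
  - simpl. apply C2_const.
  - simpl. apply (C2_plus (fun t => sumR n (fun j => f j t)) (f n)).
    apply IHn; intros; apply H; lia. apply H; lia.
Qed.

Lemma C2_comp h h1 h2 f : (forall x, is_derive h x (h1 x)) -> (forall x, is_derive h1 x (h2 x)) ->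
  (forall x, continuous h2 x) -> C2 f -> C2 (fun t => h (f t)).
Proof.
  intros Hh Hh1 Hh2 (f1 & f2 & A1 & A2).
  do 2 eexists; split. apply D1_comp; eauto.
  intros x; apply exd_cont; eexists; eauto.
  apply D1_mult. apply (D1_comp h1 h2 f f1); auto. apply A2.
Qed.

Lemma C2_exp f : C2 f -> C2 (fun t => exp (f t)).
Proof.
  apply (C2_comp exp exp exp). apply is_derive_exp. apply is_derive_exp.
  intros; apply exd_cont; eexists; apply is_derive_exp.
Qed.

Lemma C2_sqrt f : (forall t, 0 < f t) -> C2 f -> C2 (fun t => sqrt (f t)).
Proof.
  intros Hp (f1 & f2 & A1 & A2).
  assert (Hq := D1_sqrt f f1 Hp A1).
  do 2 eexists; split. apply Hq.
  eapply D1_ext.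
  apply D1_mult. apply A2. eapply D1_inv. 2: apply D1_scal with (a := 2); apply Hq.
  intros t. apply Rgt_not_eq. apply Rmult_lt_0_compat. lra. apply sqrt_lt_R0; auto.
  intros t. reflexivity. intros t; reflexivity.
Qed.

Lemma RInt_deriv (h : R -> R) : (forall t, continuous h t) ->
  forall t, is_derive (fun t => RInt h 0 t) t (h t).
Proof.
  intros Hc t. apply (is_derive_RInt (V:=R_CompleteNormedModule) h (fun t => RInt h 0 t) 0 t).
  - exists (mkposreal 1 Rlt_0_1). intros y _. apply (RInt_correct (V:=R_CompleteNormedModule)).
    apply (ex_RInt_continuous (V:=R_CompleteNormedModule)). intros; apply Hc.
  - apply Hc.
Qed.

Lemma RInt_D1 h : (forall t, continuous h t) -> D1 (fun t => RInt h 0 t) h.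
Proof. intros Hc t; split. apply RInt_deriv; auto. auto. Qed.

Lemma sumR_nonneg n f : (forall j, (j < n)%nat -> 0 <= f j) -> 0 <= sumR n f.
Proof.
  induction n; intros H; simpl. lra.
  assert (0 <= sumR n f) by (apply IHn; intros; apply H; lia).
  assert (0 <= f n) by (apply H; lia). lra.
Qed.

Lemma C1_D1 f : isC1 f -> D1 f (Derive f).
Proof. intros H t; destruct (H t) as [H1 H2]; split; auto. apply Derive_correct; auto. Qed.

Lemma bfun_C2 q E j : isC1 (E j) -> C2 (bfun q E j).
Proof.
  intros H. exists (fun t => q * E j t), (fun t => q * Derive (E j) t). split.
  - unfold bfun. apply (RInt_D1 (fun s => q * E j s)). intros t.
    apply (D1_cont _ _ t (D1_scal q _ _ (C1_D1 _ H))).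
  - apply D1_scal. apply C1_D1; auto.
Qed.

Lemma P_pos c m q n E xi t : 0 < c -> 0 < m ->
  0 < c ^ 2 * sumR n (fun j => (xi j + bfun q E j t) ^ 2) + (m * c ^ 2) ^ 2.
Proof.
  intros hc hm.
  assert (0 <= sumR n (fun j => (xi j + bfun q E j t) ^ 2)).
  { apply sumR_nonneg. intros; apply pow2_ge_0. }
  assert (0 < m * c^2) by (apply Rmult_lt_0_compat; auto; apply pow_lt; auto).
  assert (0 < (m * c ^ 2) ^ 2) by (apply pow_lt; auto).
  assert (0 <= c^2) by apply pow2_ge_0.
  assert (0 <= c ^ 2 * sumR n (fun j => (xi j + bfun q E j t) ^ 2)) by (apply Rmult_le_pos; auto).
  lra.
Qed.

Lemma Q_pos c m q n E xi t : 0 < c -> 0 < m -> 0 < Qfun c m q n E xi t.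
Proof. intros; unfold Qfun; apply sqrt_lt_R0; apply P_pos; auto. Qed.

Lemma Q_C2 c m q n E xi : 0 < c -> 0 < m -> (forall j, (j < n)%nat -> isC1 (E j)) ->
  C2 (Qfun c m q n E xi).
Proof.
  intros hc hm hE. unfold Qfun.
  apply (C2_sqrt (fun t => c ^ 2 * sumR n (fun j => (xi j + bfun q E j t) ^ 2) + (m * c ^ 2) ^ 2)).
  intros; apply P_pos; auto.
  apply (C2_plus _ (fun _ => (m * c ^ 2) ^ 2)). 2: apply C2_const.
  apply (C2_mult (fun _ => c ^ 2)). apply C2_const.
  apply (C2_sum n (fun j t => (xi j + bfun q E j t) ^ 2)).
  intros j hj.
  apply (C2_ext (fun t => (xi j + bfun q E j t) * (xi j + bfun q E j t))).
  2: intros; ring.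
  assert (C2 (fun t => xi j + bfun q E j t)).
  { apply (C2_plus (fun _ => xi j)). apply C2_const. apply bfun_C2; auto. }
  apply (C2_mult (fun t => xi j + bfun q E j t)); auto.
Qed.

Lemma cont_plus (f g : R -> R) x : continuous f x -> continuous g x -> continuous (fun t => f t + g t) x.
Proof. apply (continuous_plus (U:=R_UniformSpace) (V:=R_NormedModule) f g). Qed.
Lemma cont_mult (f g : R -> R) x : continuous f x -> continuous g x -> continuous (fun t => f t * g t) x.
Proof. apply (continuous_mult (U:=R_UniformSpace) (K:=R_AbsRing) f g). Qed.
Lemma cont_comp (f g : R -> R) x : continuous f x -> continuous g (f x) -> continuous (fun t => g (f t)) x.
Proof. apply (continuous_comp (U:=R_UniformSpace) (V:=R_UniformSpace) (W:=R_UniformSpace) f g). Qed.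
Lemma cont_const (a : R) x : continuous (fun _ : R => a) x.
Proof. apply (continuous_const (U:=R_UniformSpace) (V:=R_UniformSpace)). Qed.

Section Sol.
Variables (Q g : R -> R) (k : R) (B : R -> R).
Let F := fun s => Q s + k * (g s * sin (B s) * cos (B s)).

Lemma sol_reg Q1 g1 : D1 Q Q1 -> D1 g g1 ->
  (forall t, is_RInt F 0 t (B t)) -> D1 B F /\ C2 B /\ B 0 = 0.
Proof.
  intros HQ Hg HB.
  assert (Hc : forall x, continuous B x).
  { intros x.
    assert (H : continuous (fun y => B y - B x) x).
    { apply (continuous_RInt_0 (V:=R_NormedModule) F x).
      exists (mkposreal 1 Rlt_0_1). intros y _.
      replace (B y - B x) with (plus (opp (B x)) (B y)).
      apply (is_RInt_Chasles (V:=R_NormedModule) F x 0 y).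
      apply (is_RInt_swap (V:=R_NormedModule)). apply HB. apply HB.
      unfold plus, opp; simpl. ring. }
    apply (continuous_ext (T:=R_UniformSpace) (U:=R_UniformSpace) (fun y => (B y - B x) + B x)).
    intros; simpl; ring.
    apply cont_plus. apply H. apply cont_const. }
  assert (HF : forall x, continuous F x).
  { intros x. unfold F. apply cont_plus. eapply D1_cont; eauto.
    apply (cont_mult (fun _ => k)). apply cont_const.
    apply (cont_mult (fun s => g s * sin (B s))).
    apply cont_mult. eapply D1_cont; eauto.
    apply (cont_comp B sin). auto. apply exd_cont; eexists; apply is_derive_sin.
    apply (cont_comp B cos). auto. apply exd_cont; eexists; apply is_derive_cos. }
  assert (HD : D1 B F).
  { intros x; split; auto.
    apply (is_derive_RInt (V:=R_NormedModule) F B 0 x).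
    exists (mkposreal 1 Rlt_0_1). intros y _. apply HB. auto. }
  split; [|split]. auto.
  - exists F. eexists. split. auto.
    unfold F at 1. apply D1_plus. apply HQ.
    apply D1_scal. apply D1_mult. apply D1_mult. apply Hg. apply D1_sin. apply HD.
    apply D1_cos. apply HD.
  - assert (H0 := HB 0). apply (is_RInt_unique (V:=R_CompleteNormedModule)) in H0. rewrite RInt_point in H0.
    rewrite <- H0. reflexivity.
Qed.
End Sol.

Lemma abs_sin_le y : Rabs (sin y) <= Rabs y.
Proof.
  destruct (MVT_gen sin 0 y cos) as (c & _ & Hc).
  intros; apply is_derive_sin. intros; apply continuity_sin.
  rewrite sin_0 in Hc. replace (sin y) with (cos c * (y - 0)) by lra.
  rewrite Rabs_mult. replace (y - 0) with y by ring.
  assert (Rabs (cos c) <= 1). { apply Rabs_le. apply COS_bound. }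
  assert (0 <= Rabs y) by apply Rabs_pos. nra.
Qed.

Lemma sincos_lip a b : Rabs (sin a * cos a - sin b * cos b) <= Rabs (a - b).
Proof.
  replace (sin a * cos a - sin b * cos b) with (cos (a + b) * sin (a - b)).
  rewrite Rabs_mult.
  assert (Rabs (cos (a+b)) <= 1). { apply Rabs_le. apply COS_bound. }
  assert (Hs := abs_sin_le (a - b)). assert (0 <= Rabs (sin (a-b))) by apply Rabs_pos. nra.
  rewrite cos_plus, sin_minus.
  assert (H1 := sin2_cos2 a). assert (H2 := sin2_cos2 b). unfold Rsqr in *.
  assert (E : (cos a * cos b - sin a * sin b) * (sin a * cos b - cos a * sin b) =
    sin a * cos a * (sin b * sin b + cos b * cos b) - sin b * cos b * (sin a * sin a + cos a * cos a)) by ring.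
  rewrite H1, H2 in E. lra.
Qed.

Lemma sol_uniq (Q g : R -> R) (k : R) (B1 B2 : R -> R) :
  (forall x, continuous g x) ->
  D1 B1 (fun s => Q s + k * (g s * sin (B1 s) * cos (B1 s))) ->
  D1 B2 (fun s => Q s + k * (g s * sin (B2 s) * cos (B2 s))) ->
  B1 0 = 0 -> B2 0 = 0 -> forall t, B1 t = B2 t.
Proof.
  intros Hg H1 H2 E1 E2.
  set (w := fun t => B1 t - B2 t).
  set (w1 := fun t => k * (g t * sin (B1 t) * cos (B1 t)) - k * (g t * sin (B2 t) * cos (B2 t))).
  assert (Hw : forall t, is_derive w t (w1 t)).
  { intros t. unfold w, w1.
    replace (k * (g t * sin (B1 t) * cos (B1 t)) - k * (g t * sin (B2 t) * cos (B2 t)))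
      with ((Q t + k * (g t * sin (B1 t) * cos (B1 t))) - (Q t + k * (g t * sin (B2 t) * cos (B2 t)))) by ring.
    apply (is_derive_minus (K:=R_AbsRing) (V:=R_NormedModule) B1 B2); [apply H1|apply H2]. }
  assert (Hkey : forall t, Rabs (2 * w t * w1 t) <= 2 * (Rabs k * Rabs (g t)) * (w t ^ 2)).
  { intros t. unfold w1.
    replace (2 * w t * (k * (g t * sin (B1 t) * cos (B1 t)) - k * (g t * sin (B2 t) * cos (B2 t))))
      with (2 * (k * g t) * (w t * (sin (B1 t) * cos (B1 t) - sin (B2 t) * cos (B2 t)))) by ring.
    rewrite !Rabs_mult.
    assert (L := sincos_lip (B1 t) (B2 t)).
    fold (w t) in L. replace (w t ^ 2) with (Rabs (w t) * Rabs (w t)).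
    2: { rewrite <- Rabs_mult. rewrite Rabs_right. ring. nra. }
    assert (0 <= Rabs (w t)) by apply Rabs_pos.
    assert (0 <= Rabs k) by apply Rabs_pos.
    assert (0 <= Rabs (g t)) by apply Rabs_pos.
    assert (0 <= Rabs k * Rabs (g t)) by nra.
    rewrite (Rabs_right 2) by lra.
    assert (Rabs (w t) * Rabs (sin (B1 t) * cos (B1 t) - sin (B2 t) * cos (B2 t)) <= Rabs (w t) * Rabs (w t)) by nra.
    nra. }
  set (dG := fun s => Rabs k * Rabs (g s)).
  assert (HdG : forall x, continuous dG x).
  { intros x. unfold dG. apply (cont_mult (fun _ => Rabs k)). apply cont_const.
    apply continuous_Rabs_comp. auto. }
  set (G := fun t => RInt dG 0 t).
  assert (HG : forall t, is_derive G t (dG t)) by (apply RInt_deriv; auto).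
  assert (Main : forall a, (forall t, is_derive (fun t => w t * w t * exp (a * G t)) t
            ((2 * w t * w1 t + a * dG t * w t ^ 2) * exp (a * G t)))).
  { intros a t.
    assert (He : is_derive (fun t => exp (a * G t)) t (exp (a * G t) * (a * dG t))).
    { replace (exp (a * G t) * (a * dG t)) with (scal (a * dG t) (exp (a * G t))).
      apply (is_derive_comp (K:=R_AbsRing) (V:=R_NormedModule) exp (fun t => a * G t)).
      apply is_derive_exp. apply is_derive_scal. apply HG.
      unfold scal; simpl; unfold mult; simpl; ring. }
    assert (Hww : is_derive (fun t => w t * w t) t (w1 t * w t + w t * w1 t)).
    { apply (is_derive_mult (K:=R_AbsRing) w w); auto. intros; apply Rmult_comm. }
    replace ((2 * w t * w1 t + a * dG t * w t ^ 2) * exp (a * G t)) with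
      ((w1 t * w t + w t * w1 t) * exp (a * G t) + (w t * w t) * (exp (a * G t) * (a * dG t))) by ring.
    apply (is_derive_mult (K:=R_AbsRing) (fun t => w t * w t) (fun t => exp (a * G t))); auto.
    intros; apply Rmult_comm. }
  assert (Hw0 : w 0 = 0) by (unfold w; rewrite E1, E2; ring).
  assert (Step : forall a t, (forall x, (2 * w x * w1 x + a * dG x * w x ^ 2) * exp (a * G x) * (t - 0) <= 0) ->
     w t = 0).
  { intros a t Hs.
    destruct (MVT_gen (fun t => w t * w t * exp (a * G t)) 0 t
       (fun t => (2 * w t * w1 t + a * dG t * w t ^ 2) * exp (a * G t))) as (c & _ & Hc).
    - intros; apply Main.
    - intros x _. apply continuity_pt_filterlim.
      apply (exd_cont (fun t => w t * w t * exp (a * G t))). eexists. apply Main.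
    - simpl in Hc. rewrite Hw0 in Hc. specialize (Hs c).
      assert (Hep := exp_pos (a * G t)).
      assert (0 <= w t * w t) by nra.
      assert (w t * w t * exp (a * G t) <= 0) by lra.
      assert (w t * w t = 0) by nra. nra. }
  intros t. cut (w t = 0). unfold w; lra.
  destruct (Rle_or_lt 0 t) as [Ht|Ht].
  - apply (Step (-2)). intros x. specialize (Hkey x). assert (Hep := exp_pos ((-2) * G x)).
    apply Rabs_le_between in Hkey. unfold dG in *.
    assert ((2 * w x * w1 x + -2 * (Rabs k * Rabs (g x)) * w x ^ 2) <= 0) by lra.
    assert ((2 * w x * w1 x + -2 * (Rabs k * Rabs (g x)) * w x ^ 2) * exp (-2 * G x) <= 0) by nra.
    nra.
  - apply (Step 2). intros x. specialize (Hkey x). assert (Hep := exp_pos (2 * G x)).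
    apply Rabs_le_between in Hkey. unfold dG in *.
    assert (0 <= (2 * w x * w1 x + 2 * (Rabs k * Rabs (g x)) * w x ^ 2)) by lra.
    assert (0 <= (2 * w x * w1 x + 2 * (Rabs k * Rabs (g x)) * w x ^ 2) * exp (2 * G x)) by nra.
    nra.
Qed.

Lemma C2_expint g g1 u u1 : D1 g g1 -> D1 u u1 ->
  C2 (fun t => exp (- RInt (fun s => g s * u s ^ 2) 0 t)).
Proof.
  intros Hg Hu.
  assert (Hh : exists h1, D1 (fun s => g s * u s ^ 2) h1).
  { eexists. eapply D1_ext. apply D1_mult. apply Hg. apply D1_mult. apply Hu. apply Hu.
    intros; simpl; ring. intros; reflexivity. }
  destruct Hh as [h1 Hh].
  apply (C2_exp (fun t => - RInt (fun s => g s * u s ^ 2) 0 t)).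
  apply (C2_ext (fun t => (-1) * RInt (fun s => g s * u s ^ 2) 0 t)). 2: intros; ring.
  apply (C2_mult (fun _ => -1)). apply C2_const.
  exists (fun s => g s * u s ^ 2), h1. split; auto.
  apply RInt_D1. intros; eapply D1_cont; eauto.
Qed.

Theorem lemma3p1 (c m q : R) (n : nat) (Ef : nat -> R -> R) (E00 E01 : R)
  (hc : 0 < c) (hm : 0 < m) (hq : q <> 0)
  (hE : forall j, (j < n)%nat -> isC1 (Ef j))
  (hE0 : exists S, (forall t, sumR n (fun j => Rabs (Ef j t)) <= S) /\ S < E00)
  (hE1 : exists S, (forall t, sumR n (fun j => Rabs (Derive (Ef j) t)) <= S) /\ S < E01)
  (xi : nat -> R) :
  (forall B, solB c m q n Ef xi B -> isC2 B /\ isC2 (Afun c m q n Ef xi B)) /\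
  (forall D, solD c m q n Ef xi D -> isC2 D /\ isC2 (Cfun c m q n Ef xi D)) /\
  (forall B1 B2, solB c m q n Ef xi B1 -> solB c m q n Ef xi B2 ->
     forall t, B1 t = B2 t) /\
  (forall D1 D2, solD c m q n Ef xi D1 -> solD c m q n Ef xi D2 ->
     forall t, D1 t = D2 t).
Proof.
  set (Qf := Qfun c m q n Ef xi).
  assert (HQ := Q_C2 c m q n Ef xi hc hm hE). fold Qf in HQ.
  destruct (C2_canon _ HQ) as [HQ1 HQ2].
  assert (Hpos : forall t, 0 < Qf t) by (intros; apply Q_pos; auto).
  set (g := fun s => / Qf s * Qder c m q n Ef xi s).
  assert (Hg : exists g1, D1 g g1).
  { eexists. apply D1_mult. apply D1_inv. intros t; apply Rgt_not_eq, Hpos. apply HQ1.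
    apply HQ2. }
  destruct Hg as [g1 Hg].
  assert (Hgc : forall x, continuous g x) by (intros; eapply D1_cont; eauto).
  assert (SB : forall B, solB c m q n Ef xi B ->
     D1 B (fun s => Qf s + (-1) * (g s * sin (B s) * cos (B s))) /\ C2 B /\ B 0 = 0).
  { intros B HB. eapply sol_reg. apply HQ1. apply Hg. intros t.
    eapply (is_RInt_ext (V:=R_NormedModule)). 2: apply (HB t).
    intros; unfold g, Qf; simpl; ring. }
  assert (SD : forall B, solD c m q n Ef xi B ->
     D1 B (fun s => Qf s + 1 * (g s * sin (B s) * cos (B s))) /\ C2 B /\ B 0 = 0).
  { intros B HB. eapply sol_reg. apply HQ1. apply Hg. intros t.
    eapply (is_RInt_ext (V:=R_NormedModule)). 2: apply (HB t).
    intros; unfold g, Qf; simpl; ring. }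
  split; [|split; [|split]].
  - intros B HB. destruct (SB B HB) as (H1 & H2 & H3). split. apply C2_isC2; auto.
    apply C2_isC2. unfold Afun.
    apply (C2_expint g g1 (fun s => sin (B s)) (fun s => cos (B s) * (Qf s + -1 * (g s * sin (B s) * cos (B s)))) Hg). apply D1_sin. apply H1.
  - intros B HB. destruct (SD B HB) as (H1 & H2 & H3). split. apply C2_isC2; auto.
    apply C2_isC2. unfold Cfun.
    apply (C2_mult (fun _ => / Qfun c m q n Ef xi 0)). apply C2_const.
    apply (C2_expint g g1 (fun s => cos (B s)) (fun s => - sin (B s) * (Qf s + 1 * (g s * sin (B s) * cos (B s)))) Hg). apply D1_cos. apply H1.
  - intros B1 B2 HB1 HB2. destruct (SB B1 HB1) as (H1 & _ & H3). destruct (SB B2 HB2) as (H1' & _ & H3').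
    eapply sol_uniq; eauto.
  - intros B1 B2 HB1 HB2. destruct (SD B1 HB1) as (H1 & _ & H3). destruct (SD B2 HB2) as (H1' & _ & H3').
    eapply sol_uniq; eauto.
Qed.
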